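(* Every continuous-variable PR box (as defined in the context) is an extreme point of the convex set $\mathcal M_{\mathrm{NS}}$ of no-signaling behaviours; i.e., if $\boldsymbol\mu\in\mathcal M_{\mathrm{PR}}$ and $\boldsymbol\mu=q\boldsymbol\mu^*+(1-q)\boldsymbol\mu'$ with $\boldsymbol\mu^*,\boldsymbol\mu'\in\mathcal M_{\mathrm{NS}}$ and $0\le q\le1$, then either $q=1$ and $\boldsymbol\mu^*=\boldsymbol\mu$, or $q=0$ and $\boldsymbol\mu'=\boldsymbol\mu$ (or $\boldsymbol\mu^*=\boldsymbol\mu'=\boldsymbol\mu$).
   Context: A behaviour is a family $\boldsymbol\mu=(\mu_{x,y})_{x,y\in\{0,1\}}$ of Borel probability measures on $\mathbb R\times\mathbb R$; convex combinations are taken componentwise. It is no-signaling if $\mu_{x,0}(A\times\mathbb R)=\mu_{x,1}(A\times\mathbb R)$ for all $x\in\{0,1\}$ and Borel $A\subseteq\mathbb R$, and $\mu_{0,y}(\mathbb R\times B)=\mu_{1,y}(\mathbb R\times B)$ for all $y\in\{0,1\}$ and Borel $B$; $\mathcal M_{\mathrm{NS}}$ denotes the set of no-signaling behaviours. For $(a,b)\in\mathbb R^2$, $\delta_{a,b}$ is the Dirac measure at $(a,b)$. A CV PR box of order $k\in\mathbb N$ is a behaviour of the form $\mu_{x,y}=\frac1k\sum_{j=1}^k\delta_{a_{x,j},\,b_{y,[j+xy]_k}}$, where for each $x,y\in\{0,1\}$, $\boldsymbol a_x=(a_{x,1},\dots,a_{x,k})\in\mathbb R^k$ and $\boldsymbol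 b_y=(b_{y,1},\dots,b_{y,k})\in\mathbb R^k$ each have pairwise distinct components, and $[\,\cdot\,]_k$ denotes reduction modulo $k$ to an index in $\{1,\dots,k\}$. $\mathcal M_{\mathrm{PR}}$ is the set of all CV PR boxes of all orders $k\in\mathbb N$ (for $k=1$ these are the deterministic behaviours $\mu_{x,y}=\delta_{a_x,b_y}$). *)

(* Defs.v *)
From HB Require Import structures.
From mathcomp Require Import all_boot all_order all_algebra.
From mathcomp Require Import all_classical all_reals all_analysis.
Set Implicit Arguments. Unset Strict Implicit. Unset Printing Implicit Defensive.
Import Order.TTheory GRing.Theory Num.Theory.
Local Open Scope classical_set_scope.
Local Open Scope ring_scope.
Local Open Scope ereal_scope.

(* A behaviour: for each pair of inputs (x,y) in {0,1}^2 (encoded as bool),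
   a Borel probability measure on R x R (product sigma-algebra = Borel on R^2). *)
Definition behaviour (R : realType) := bool -> bool -> probability (R * R)%type R.

Definition convex_comb (R : realType) (mu mu1 mu2 : behaviour R) (q : R) : Prop :=
  forall x y (A : set (R * R)), measurable A ->
    mu x y A = (q%:E * mu1 x y A + (1 - q)%:E * mu2 x y A)%E.

Definition beh_eq (R : realType) (mu nu : behaviour R) : Prop :=
  forall x y (A : set (R * R)), measurable A -> mu x y A = nu x y A.

Definition no_signaling (R : realType) (mu : behaviour R) : Prop :=
  (forall x (A : set R), measurable A ->
     mu x false (A `*` setT) = mu x true (A `*` setT)) /\
  (forall y (B : set R), measurable B ->
     mu false y (setT `*` B) = mu true y (setT `*` B)).

(* CV PR box of order k = n.+1 (k >= 1); indices j in {0,..,k-1} and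
   [j + xy]_k becomes (j + x*y) mod k. *)
Definition is_CVPR (R : realType) (mu : behaviour R) : Prop :=
  exists (n : nat) (a b : bool -> 'I_n.+1 -> R),
    (forall x, injective (a x)) /\ (forall y, injective (b y)) /\
    forall x y (A : set (R * R)), measurable A ->
      mu x y A = ((n.+1%:R)^-1)%:E *
        \sum_(j < n.+1) \d_(a x j, b y (inord ((j + (x && y)) %% n.+1)%N)) A.

(* Main.v *)
Require Import Defs.
From HB Require Import structures.
From mathcomp Require Import all_boot all_order all_algebra.
From mathcomp Require Import all_classical all_reals all_analysis.
Import Order.TTheory GRing.Theory Num.Theory.
Local Open Scope classical_set_scope.
Local Open Scope ring_scope.

Lemma set1_meas (R : realType) (p : R * R) : measurable [set p].
Proof.
case: p => u v.
have -> : [set (u, v)] = [set u] `*` [set v].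
  by apply/seteqP; split => -[s t] /=; [case=> -> -> | case => /= -> ->].
apply: measurableX; exact: measurable_set1.
Qed.

Lemma supp (R : realType) (k : nat) (nu : probability (R * R)%type R)
  (pts : 'I_k -> (R * R)%type) (inj : injective pts)
  (hz : forall A, measurable A -> (forall i, ~ A (pts i)) -> nu A = 0%E)
  (A : set (R * R)) (mA : measurable A) :
  nu A = (\sum_(i < k) nu [set pts i] * \d_(pts i) A)%E.
Proof.
set S := \big[setU/set0]_(i < k) [set pts i].
have mS : measurable S by apply: bigsetU_measurable => i _; exact: set1_meas.
have inS j : S (pts j).
  by rewrite /S (bigD1 j) //=; left.
have -> : nu A = nu (A `&` S).
  rewrite -[in LHS](setIT A) -(setUCr S) setIUr measureU //; last 3 first.
  - exact: measurableI.
  - by apply: measurableI => //; exact: measurableC.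
  - by rewrite setIACA setICr setI0.
  rewrite -[RHS]adde0; congr (_ + _)%E.
  apply: hz; last by move=> i [_]; apply.
  by apply: measurableI => //; exact: measurableC.
rewrite /S big_distrr /= measure_bigsetU_ord //; last 2 first.
- by move=> i; apply: measurableI => //; exact: set1_meas.
- move=> i j _ _ [p [[_ ->] [_ /= /inj]]] //.
apply: eq_bigr => i _; rewrite diracE.
case: (boolP (pts i \in A)) => h.
- rewrite mule1; congr (nu _); apply/seteqP; split => p.
    by case=> _ ->.
  by move=> ->; split => //; rewrite -in_setE.
- rewrite mule0 -(measure0 nu); congr (nu _); apply/seteqP; split => p //.
  by case=> hp /= pe; move: h; rewrite -pe; move/negP; apply; rewrite in_setE.
Qed.

Definition shf (n : nat) (x y : bool) (i : 'I_n.+1) : 'I_n.+1 :=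
  inord ((i + (x && y)) %% n.+1).
Definition Pt (R : realType) (n : nat) (a b : bool -> 'I_n.+1 -> R) x y i : (R * R)%type :=
  (a x i, b y (shf n x y i)).

Lemma shf0 n x y (i : 'I_n.+1) : ~~ (x && y) -> shf n x y i = i.
Proof.
move=> /negbTE h; rewrite /shf h addn0 modn_small // inord_val.
by apply: val_inj. Qed.


Lemma shf_inj n x y : injective (@shf n x y).
Proof.
move=> i j; rewrite /shf => /(congr1 (@nat_of_ord _)); rewrite !inordK ?ltn_pmod //.
move/eqP; rewrite eqn_modDr !modn_small // => /eqP h; exact: val_inj.
Qed.

Lemma shf_succ n (i : nat) : (i.+1 < n.+1)%N ->
  shf n true true (inord i) = inord i.+1.
Proof.
move=> h; apply: val_inj; rewrite /shf /= !inordK ?ltn_pmod //; last exact: ltnW.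
by rewrite addn1 modn_small.
exact: ltnW. Qed.

Lemma core (R : realType) (n : nat) (a b : bool -> 'I_n.+1 -> R)
  (ha : forall x, injective (a x)) (hb : forall y, injective (b y))
  (nu : behaviour R) (NS : no_signaling nu)
  (hz : forall x y A, measurable A -> (forall i, ~ A (@Pt R n a b x y i)) -> nu x y A = 0%E) :
  forall x y i, nu x y [set @Pt R n a b x y i] = ((n.+1%:R)^-1)%:E.
Proof.
have injP x y : injective (@Pt R n a b x y) by move=> i j [/ha].
have dec x y (A : set (R * R)) (mA : measurable A) := @supp R n.+1 (nu x y) _ (injP x y) (hz x y) A mA.
set p := fun x y i => nu x y [set @Pt R n a b x y i].
have m1 x y j : nu x y ([set a x j] `*` setT) = p x y j.
  rewrite dec; last by apply: measurableX => //; exact: measurable_set1.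
  rewrite (bigD1 j) //= diracE mem_set // mule1 big1 ?adde0 // => i ne.
  rewrite diracE memNset ?mule0 //= => -[/ha eq _]; by rewrite eq eqxx in ne.
have m2 x y m : nu x y (setT `*` [set b y m]) =
    (\sum_(i < n.+1 | shf n x y i == m) p x y i)%E.
  rewrite dec; last by apply: measurableX => //; exact: measurable_set1.
  rewrite [RHS]big_mkcond; apply: eq_bigr => i _; rewrite diracE.
  case: eqP => [<-|ne]; first by rewrite mem_set // mule1.
  by rewrite memNset ?mule0 //= => -[_ /hb].
have e1 x j : p x false j = p x true j.
  by rewrite -!m1; apply: NS.1; exact: measurable_set1.
have e2 m : p false false m = p true false m.
  have := NS.2 false [set b false m] (measurable_set1 _).
  rewrite !m2 (big_pred1 m) ?(big_pred1 m) // => i; by rewrite shf0.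
have e3 j : p false true (shf n true true j) = p true true j.
  have := NS.2 true [set b true (shf n true true j)] (measurable_set1 _).
  rewrite !m2 (big_pred1 (shf n true true j)) ?(big_pred1 j) //.
  - by move=> i; rewrite inj_eq //; exact: shf_inj.
  - by move=> i; rewrite shf0.
have step j : p false false (shf n true true j) = p false false j.
  by rewrite e1 e3 -e1 -e2.
have cst : forall i, (i < n.+1)%N -> p false false (inord i) = p false false ord0.
  elim=> [_|i IH hi]; first by congr (p _ _ _); apply: val_inj; rewrite /= inordK.
  by rewrite -shf_succ // step IH // ltnW.
have cst' j : p false false j = p false false ord0 by rewrite -(cst j) ?inord_val.
have tot : (\sum_(i < n.+1) p false false i = 1)%E.
  rewrite -(probability_setT (nu false false)) (dec _ _ setT) //.
  by apply: eq_bigr => i _; rewrite diracE mem_set // mule1.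
have cval : p false false ord0 = (n.+1%:R^-1)%:E.
  move: tot; under eq_bigr do rewrite cst'.
  have : (0 <= p false false ord0)%E by apply: measure_ge0.
  have : (p false false ord0 <= 1)%E by apply: probability_le1; exact: set1_meas.
  case: (p false false ord0) => [r| |] //= _ _.
  rewrite sumEFin sumr_const card_ord => -[h]; congr EFin.
  by rewrite -[LHS](mulfK (_ : n.+1%:R != 0)) ?pnatr_eq0 // mulr_natr h mul1r.
move=> x y i; rewrite -/(p x y i).
case: x; case: y; [rewrite -e1 -e2 | rewrite -e2 | rewrite -e1 | idtac]; by rewrite cst' cval. Qed.

Lemma final (R : realType) (n : nat) (a b : bool -> 'I_n.+1 -> R)
  (ha : forall x, injective (a x)) (hb : forall y, injective (b y))
  (mu nu : behaviour R)
  (hmu : forall x y (A : set (R * R)), measurable A ->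
      mu x y A = (((n.+1%:R)^-1)%:E * \sum_(j < n.+1) \d_(@Pt R n a b x y j) A)%E)
  (NS : no_signaling nu)
  (hz0 : forall x y A, measurable A -> mu x y A = 0%E -> nu x y A = 0%E) :
  beh_eq nu mu.
Proof.
have hz x y A : measurable A -> (forall i, ~ A (@Pt R n a b x y i)) -> nu x y A = 0%E.
  move=> mA nA; apply: hz0 => //; rewrite hmu // big1 ?mule0 // => i _.
  by rewrite diracE memNset.
have injP x y : injective (@Pt R n a b x y) by move=> i j [/ha].
move=> x y A mA.
rewrite (@supp R n.+1 (nu x y) _ (injP x y) (hz x y) A mA) hmu //.
rewrite ge0_sume_distrr //; apply: eq_bigr => i _.
by rewrite (@core R n a b ha hb nu NS hz).
Qed.

Theorem mainTheorem2 (R : realType) (mu mu1 mu2 : behaviour R) (q : R) :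
  is_CVPR mu -> no_signaling mu1 -> no_signaling mu2 ->
  0 <= q <= 1 -> convex_comb mu mu1 mu2 q ->
  (q = 1 /\ beh_eq mu1 mu) \/ (q = 0 /\ beh_eq mu2 mu) \/
  (beh_eq mu1 mu /\ beh_eq mu2 mu).
Proof.
move=> [n [a [b [ha [hb hmu]]]]] NS1 NS2 /andP[q0 q1] cc.
have [qE|qn0] := eqVneq q 0.
  right; left; split=> // x y A mA.
  by rewrite cc // qE subr0 mul1e (_ : 0%:E = 0%E) // mul0e add0e.
have [qE|qn1] := eqVneq q 1.
  left; split=> // x y A mA.
  by rewrite cc // qE subrr mul1e (_ : 0%:E = 0%E) // mul0e adde0.
have hq : (0 < q%:E)%E by rewrite lte_fin lt0r qn0.
have hq' : (0 < (1 - q)%:E)%E by rewrite lte_fin subr_gt0 lt_neqAle qn1.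
right; right; split.
- apply: (@final R n a b ha hb _ _ hmu NS1) => x y A mA.
  rewrite cc // => /eqP; rewrite padde_eq0; last 2 first.
  + by rewrite mule_ge0 // ltW.
  + by rewrite mule_ge0 // ltW.
  by rewrite !mule_eq0 gt_eqF //= => /andP[/eqP].
- apply: (@final R n a b ha hb _ _ hmu NS2) => x y A mA.
  rewrite cc // => /eqP; rewrite padde_eq0; last 2 first.
  + by rewrite mule_ge0 // ltW.
  + by rewrite mule_ge0 // ltW.
  by rewrite !mule_eq0 gt_eqF //= (gt_eqF hq') /= => /andP[_ /eqP].
Qed.
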